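(* Let $F(\rho,\eta)$ be a smooth function on an open subset of the half-plane $\{\rho>0\}$ satisfying $F_{\rho\rho}+F_{\eta\eta}=\frac{3F}{4\rho^2}$ (i.e. $F$ is an eigenfunction with eigenvalue $3/4$ of the hyperbolic Laplacian $\rho^2(\partial_\rho^2+\partial_\eta^2)$), and let $\varphi$ be a twistor, i.e. $\varphi=c_0m_0+c_1m_1$ with $c_0=-(a\eta-b)/\sqrt\rho$, $c_1=a\sqrt\rho$ for some constants $a,b\in\mathbb{R}$. Define $$\Phi=\tfrac12F\,\flat\varphi+dF\cdot\varphi,$$ where $\flat\varphi=c_0\mu_0+c_1\mu_1$ and $dF\cdot\varphi=\rho F_\rho(c_0\mu_0-c_1\mu_1)+\rho F_\eta(c_1\mu_0+c_0\mu_1)$. Then $\Phi$ is a solution of the Joyce equation; explicitly, writing $\Phi=A_0\mu_0+A_1\mu_1$, i.e. $$A_0=(\tfrac12F+\rho F_\rho)c_0+\rho F_\eta c_1,\qquad A_1=\rho F_\eta c_0+(\tfrac12F-\rho F_\rho)c_1,$$ one has $(A_0)_\rho+(A_1)_\eta=A_0/\rho$ and $(A_0)_\eta-(A_1)_\rho=0$.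
   Context: Setting: the hyperbolic plane in half-space coordinates $(\rho>0,\eta)$ with metric $(d\rho^2+d\eta^2)/\rho^2$. Its spinor bundle $\mathcal W$ is a real rank-$2$ bundle with orthonormal frame $m_0,m_1$ and dual coframe $\mu_0,\mu_1$ of $\mathcal W^*$, where $T^*\mathcal H^2$ is identified with trace-free symmetric products via $\mu_0^2-\mu_1^2=d\rho/\rho$, $2\mu_0\mu_1=d\eta/\rho$; then $dF=\rho F_\rho(\mu_0^2-\mu_1^2)+2\rho F_\eta\mu_0\mu_1$, and $dF\cdot\varphi$ is the natural contraction $T^*\mathcal H^2\otimes\mathcal W\to\mathcal W^*$ (given explicitly in the claim), while $\flat$ is the metric isomorphism $\mathcal W\to\mathcal W^*$ sending $m_i\mapsto\mu_i$. Twistors are the sections of $\mathcal W$ of the stated form (the ''constant'' sections in the model $\mathcal W=\mathcal H^2\times\mathbb{R}^2$). The Joyce equation for a section $\Phi=A_0\mu_0+A_1\mu_1$ of $\mathcal W^*$ is the system $(A_0)_\rho+(A_1)_\eta=A_0/\rho$, $(A_0)_\eta-(A_1)_\rho=0$. *)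

(* Defs.v *)
From Stdlib Require Import Reals.
From Coquelicot Require Import Coquelicot.
Open Scope R_scope.

(* Functions on the half-plane, in coordinates (rho, eta). *)
Definition Fun2 := R -> R -> R.

Definition d_rho (f : Fun2) : Fun2 := fun r e => Derive (fun r' => f r' e) r.
Definition d_eta (f : Fun2) : Fun2 := fun r e => Derive (fun e' => f r e') e.

Definition open2 (U : R -> R -> Prop) : Prop :=
  forall r e, U r e -> exists eps, 0 < eps /\
    forall r' e', Rabs (r' - r) < eps -> Rabs (e' - e) < eps -> U r' e'.

Fixpoint Ck_on (U : R -> R -> Prop) (k : nat) (f : Fun2) : Prop :=
  match k with
  | O => forall r e, U r e ->
           continuous (fun p : R * R => f (fst p) (snd p)) (r, e)
  | S k' => (forall r e, U r e ->
               continuous (fun p : R * R => f (fst p) (snd p)) (r, e) /\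
               ex_derive (fun r' => f r' e) r /\ ex_derive (fun e' => f r e') e)
            /\ Ck_on U k' (d_rho f) /\ Ck_on U k' (d_eta f)
  end.

Definition smooth_on (U : R -> R -> Prop) (f : Fun2) : Prop :=
  forall k, Ck_on U k f.

(* Sections of W^* (and of W via the frame m_0,m_1) are represented by
   their coefficient pairs in the (co)frame. *)
Definition Sec := R -> R -> (R * R).

Definition twistor (a b : R) : Sec :=
  fun r e => (- (a * e - b) / sqrt r, a * sqrt r).

(* flat : W -> W^*,  m_i |-> mu_i *)
Definition flat (phi : Sec) : Sec := phi.

Definition dF_dot (F : Fun2) (phi : Sec) : Sec :=
  fun r e =>
    let c0 := fst (phi r e) in let c1 := snd (phi r e) in
    (r * d_rho F r e * c0 + r * d_eta F r e * c1,
     - (r * d_rho F r e * c1) + r * d_eta F r e * c0).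

Definition PhiOf (F : Fun2) (phi : Sec) : Sec :=
  fun r e =>
    ((1/2) * F r e * fst (flat phi r e) + fst (dF_dot F phi r e),
     (1/2) * F r e * snd (flat phi r e) + snd (dF_dot F phi r e)).

Definition joyce_at (Phi : Sec) (r e : R) : Prop :=
  let A0 := fun r e => fst (Phi r e) in
  let A1 := fun r e => snd (Phi r e) in
  ex_derive (fun r' => A0 r' e) r /\ ex_derive (fun e' => A0 r e') e /\
  ex_derive (fun r' => A1 r' e) r /\ ex_derive (fun e' => A1 r e') e /\
  d_rho A0 r e + d_eta A1 r e = A0 r e / r /\
  d_eta A0 r e - d_rho A1 r e = 0.

(* Main.v *)
Require Import Defs.
From Stdlib Require Import Reals Lra.
From Coquelicot Require Import Coquelicot.
Open Scope R_scope.
Lemma is_derive_eq (f : R -> R) (x v w : R) : is_derive f x v -> v = w -> is_derive f x w.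
Proof. intros H ->; exact H. Qed.
Lemma dplus (f g : R -> R) (x df dg : R) : is_derive f x df -> is_derive g x dg -> is_derive (fun t => f t + g t) x (df + dg).
Proof. intros H H0; exact (is_derive_plus f g x df dg H H0). Qed.
Lemma dmult (f g : R -> R) (x df dg : R) : is_derive f x df -> is_derive g x dg -> is_derive (fun t => f t * g t) x (df * g x + f x * dg).
Proof. intros H H0; exact (is_derive_mult f g x df dg H H0 Rmult_comm). Qed.
Lemma dopp (f : R -> R) (x df : R) : is_derive f x df -> is_derive (fun t => - f t) x (- df).
Proof. intros H; exact (is_derive_opp f x df H). Qed.
Lemma dconst (c x : R) : is_derive (fun _ => c) x 0.
Proof. exact (is_derive_const c x). Qed.
Ltac dstep := first [ apply dplus | apply dopp | apply dmult | apply dconst | eassumption ].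
Lemma derA0 (f g h p q m : R -> R) (x df dg dh dp dq dm : R) :
  is_derive f x df -> is_derive g x dg -> is_derive h x dh -> is_derive p x dp ->
  is_derive q x dq -> is_derive m x dm ->
  is_derive (fun t => 1/2 * f t * p t + (m t * g t * p t + m t * h t * q t)) x
   (1/2 * (df * p x + f x * dp) + (m x * g x * dp + (dm * g x + m x * dg) * p x
     + m x * h x * dq + (dm * h x + m x * dh) * q x)).
Proof. intros. eapply is_derive_eq.
 apply dplus. apply dmult. apply dmult. apply dconst. eassumption. eassumption.
 apply dplus. apply dmult. apply dmult. 
 exact H4. exact H0. exact H2. apply dmult. apply dmult. exact H4. exact H1. exact H3.
 cbv beta. ring. Qed.
Lemma derA1 (f g h p q m : R -> R) (x df dg dh dp dq dm : R) :
  is_derive f x df -> is_derive g x dg -> is_derive h x dh -> is_derive p x dp ->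
  is_derive q x dq -> is_derive m x dm ->
  is_derive (fun t => 1/2 * f t * q t + (- (m t * g t * q t) + m t * h t * p t)) x
   (1/2 * (df * q x + f x * dq) + (- (m x * g x * dq + (dm * g x + m x * dg) * q x)
     + m x * h x * dp + (dm * h x + m x * dh) * p x)).
Proof. intros. eapply is_derive_eq.
 apply dplus. apply dmult. apply dmult. apply dconst. exact H. exact H3.
 apply dplus. apply dopp. apply dmult. apply dmult. exact H4. exact H0. exact H3.
 apply dmult. apply dmult. exact H4. exact H1. exact H2.
 cbv beta. ring. Qed.
Lemma sqrt_ne r : 0 < r -> sqrt r <> 0.
Proof. intros; apply Rgt_not_eq, sqrt_lt_R0; lra. Qed.
Lemma dc0r (a b e r : R) : 0 < r -> is_derive (fun x => - (a*e-b) / sqrt x) r ((a*e-b)/(2*r*sqrt r)).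
Proof. intros. pose proof (sqrt_ne r H) as Hs. auto_derive. tauto.
 rewrite sqrt_sqrt by lra. field. split; lra. Qed.
Lemma dc1r (a r : R) : 0 < r -> is_derive (fun x => a * sqrt x) r (a/(2*sqrt r)).
Proof. intros. pose proof (sqrt_ne r H) as Hs. auto_derive. lra. field. tauto. Qed.
Lemma dc0e (a b e r : R) : 0 < r -> is_derive (fun x => - (a*x-b) / sqrt r) e (-a/sqrt r).
Proof. intros. pose proof (sqrt_ne r H) as Hs. auto_derive. tauto. field. tauto. Qed.
Lemma dc1e (a e r : R) : is_derive (fun x => a * sqrt r) e 0.
Proof. apply dconst. Qed.
Lemma did (x : R) : is_derive (fun t => t) x 1.
Proof. auto_derive; auto; ring. Qed.
Lemma joyce_intro (Phi : Sec) (r e v0r v0e v1r v1e : R) :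
  is_derive (fun r' => fst (Phi r' e)) r v0r ->
  is_derive (fun e' => fst (Phi r e')) e v0e ->
  is_derive (fun r' => snd (Phi r' e)) r v1r ->
  is_derive (fun e' => snd (Phi r e')) e v1e ->
  v0r + v1e = fst (Phi r e) / r -> v0e - v1r = 0 -> joyce_at Phi r e.
Proof.
  intros H1 H2 H3 H4 E1 E2. unfold joyce_at, d_rho, d_eta; cbv beta zeta.
assert (D1 : Derive (fun r' : R => fst (Phi r' e)) r = v0r) by (apply is_derive_unique; exact H1).
  assert (D2 : Derive (fun e' : R => fst (Phi r e')) e = v0e) by (apply is_derive_unique; exact H2).
  assert (D3 : Derive (fun r' : R => snd (Phi r' e)) r = v1r) by (apply is_derive_unique; exact H3).
  assert (D4 : Derive (fun e' : R => snd (Phi r e')) e = v1e) by (apply is_derive_unique; exact H4).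
  rewrite D1, D2, D3, D4.
  repeat split; auto; eexists; eassumption.
Qed.

Lemma mixed (U : R -> R -> Prop) (F : R -> R -> R) r e :
  open2 U -> Ck_on U 2 F -> U r e -> d_rho (d_eta F) r e = d_eta (d_rho F) r e.
Proof.
  intros HU Hs Hre.
  destruct Hs as [HF [[HR [HRr HRe]] [HE [HEr HEe]]]].
  destruct (HU r e Hre) as [eps [Heps HN]].
  apply Schwarz.
  - exists (mkposreal eps Heps). intros u v Hu Hv. simpl in Hu, Hv.
    pose proof (HN u v Hu Hv) as Huv.
    destruct (HF u v Huv) as [_ [A B]]. destruct (HE u v Huv) as [_ [C _]].
    destruct (HR u v Huv) as [_ [_ D]]. repeat split; assumption.
  - apply continuity_2d_pt_filterlim. exact (HEr r e Hre).
  - apply continuity_2d_pt_filterlim. exact (HRe r e Hre).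
Qed.
Theorem proposition7p1 (U : R -> R -> Prop) (F : R -> R -> R) (a b : R) :
  open2 U ->
  (forall r e, U r e -> 0 < r) ->
  smooth_on U F ->
  (forall r e, U r e ->
     d_rho (d_rho F) r e + d_eta (d_eta F) r e = 3 * F r e / (4 * r ^ 2)) ->
  forall r e, U r e -> joyce_at (PhiOf F (twistor a b)) r e.
Proof.
  intros HU Hpos Hs Heq r e Hre.
  pose proof (Hpos r e Hre) as Hr.
  pose proof (mixed U F r e HU (Hs 2%nat) Hre) as Hm.
  pose proof (Heq r e Hre) as Hl.
  destruct (Hs 2%nat) as [HF [[HR [HRr HRe]] [HE [HEr HEe]]]].
  destruct (HF r e Hre) as [_ [Fr Fe]].
  destruct (HR r e Hre) as [_ [Rr Re]].
  destruct (HE r e Hre) as [_ [Er Ee]].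
  apply Derive_correct in Fr, Fe, Rr, Re, Er, Ee.
  change (is_derive (fun t => F t e) r (d_rho F r e)) in Fr.
  change (is_derive (fun t => F r t) e (d_eta F r e)) in Fe.
  change (is_derive (fun t => d_rho F t e) r (d_rho (d_rho F) r e)) in Rr.
  change (is_derive (fun t => d_rho F r t) e (d_eta (d_rho F) r e)) in Re.
  change (is_derive (fun t => d_eta F t e) r (d_rho (d_eta F) r e)) in Er.
  change (is_derive (fun t => d_eta F r t) e (d_eta (d_eta F) r e)) in Ee.
  eapply joyce_intro.
  - exact (derA0 _ _ _ _ _ _ r _ _ _ _ _ _ Fr Rr Er (dc0r a b e r Hr) (dc1r a r Hr) (did r)).
  - exact (derA0 _ _ _ _ _ _ e _ _ _ _ _ _ Fe Re Ee (dc0e a b e r Hr) (dc1e a e r) (dconst r e)).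
  - exact (derA1 _ _ _ _ _ _ r _ _ _ _ _ _ Fr Rr Er (dc0r a b e r Hr) (dc1r a r Hr) (did r)).
  - exact (derA1 _ _ _ _ _ _ e _ _ _ _ _ _ Fe Re Ee (dc0e a b e r Hr) (dc1e a e r) (dconst r e)).
  - cbv beta. unfold PhiOf, twistor, flat, dF_dot; cbn [fst snd].
    replace (d_eta (d_eta F) r e) with (3 * F r e / (4 * r ^ 2) - d_rho (d_rho F) r e) by lra.
    rewrite Hm.
    generalize (F r e) (d_rho F r e) (d_eta F r e) (d_rho (d_rho F) r e) (d_eta (d_rho F) r e).
    intros.
    assert (Hs2 := sqrt_sqrt r (Rlt_le _ _ Hr)). assert (Hsp := sqrt_lt_R0 r Hr).
    revert Hs2 Hsp. generalize (sqrt r). intros s Hs2 Hsp. subst r.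
    field. lra.
  - cbv beta.
    replace (d_eta (d_eta F) r e) with (3 * F r e / (4 * r ^ 2) - d_rho (d_rho F) r e) by lra.
    rewrite Hm.
    generalize (F r e) (d_rho F r e) (d_eta F r e) (d_rho (d_rho F) r e) (d_eta (d_rho F) r e).
    intros.
    assert (Hs2 := sqrt_sqrt r (Rlt_le _ _ Hr)). assert (Hsp := sqrt_lt_R0 r Hr).
    revert Hs2 Hsp. generalize (sqrt r). intros s Hs2 Hsp. subst r.
    field. lra.
Qed.
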